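(* Let $k>500$ and $\ln^3k/\sqrt k<\delta<1/100$, let $d=300\lceil\ln k\rceil$ and $\varepsilon=50\delta/\lceil\ln k\rceil$, and let $c^1,\dots,c^k$ be sampled independently and uniformly from the grid $G=\{0,\varepsilon,2\varepsilon,\dots\}^d\cap[0,1]^d$. Then with probability at least $1-1/k^2$, $\|c^i-c^j\|_2\ge\sqrt d/5$ for all $i\ne j$.
   Context: $G$ is the set of points of $[0,1]^d$ all of whose coordinates are nonnegative integer multiples of $\varepsilon$. *)

(* Defs.v *)
From HB Require Import structures.
From mathcomp Require Import all_boot all_order all_algebra.
From mathcomp Require Import all_classical all_reals all_analysis.
Set Implicit Arguments. Unset Strict Implicit. Unset Printing Implicit Defensive.
Import Order.TTheory GRing.Theory Num.Theory.
Local Open Scope ring_scope.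

(* Ambient bound on integer multipliers: any t with t * eps <= 1 satisfies
   t <= 1/eps < M, so indices 'I_M cover all grid coordinates. *)
Definition grid_bound (R : realType) (eps : R) : nat := (Num.trunc eps^-1).+2.

(* A grid point is encoded by its integer multipliers t : 'I_d -> 'I_M;
   the actual point is (t_1 eps, ..., t_d eps). *)
Definition grid_idx (R : realType) (d : nat) (eps : R) :=
  {ffun 'I_d -> 'I_(grid_bound eps)}.

Definition grid_point (R : realType) (d : nat) (eps : R) (t : grid_idx d eps)
  : 'I_d -> R := fun l => (t l : nat)%:R * eps.

Definition grid (R : realType) (d : nat) (eps : R) : {set grid_idx d eps} :=
  [set t | [forall l, 0 <= grid_point t l <= 1]].

Definition dist2 (R : realType) (d : nat) (x y : 'I_d -> R) : R :=
  Num.sqrt (\sum_(l < d) (x l - y l) ^+ 2).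

(* Probability, for k independent uniform samples from G, that all pairwise
   distances of distinct samples are >= r: (#good k-tuples in G^k) / #G^k. *)
Definition prob_sep (R : realType) (d : nat) (eps : R) (k : nat) (r : R) : R :=
  (#|[set c : {ffun 'I_k -> grid_idx d eps} |
       [forall i, c i \in grid d eps] &&
       [forall i, forall j, (i != j) ==>
          (r <= dist2 (grid_point (c i)) (grid_point (c j)))]]|)%:R
  / (#|grid d eps| ^ k)%:R.

(* Main.v *)
Require Import Defs.
From HB Require Import structures.
From mathcomp Require Import all_boot all_order all_algebra.
From mathcomp Require Import all_classical all_reals all_analysis.
From mathcomp Require Import ring lra.
Import Order.TTheory GRing.Theory Num.Theory.
Local Open Scope ring_scope.


Lemma sum_sq (R : realType) (a e : R) (m : nat) :
 \sum_(t < m) (a - t%:R * e) ^+ 2 =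
   m%:R * (a - e * (m%:R - 1) / 2) ^+ 2 + e ^+ 2 * m%:R * (m%:R ^+ 2 - 1) / 12.
Proof.
elim: m => [|m IH]; first by rewrite big_ord0 !mul0r mulr0 !mul0r add0r.
rewrite big_ord_recr /= IH -addn1 natrD /=.
by field.
Qed.

Lemma sum_sq_ge (R : realType) (a e : R) (m : nat) :
  1 <= m%:R * e -> m%:R * (1 - e ^+ 2) / 12 <= \sum_(t < m) (a - t%:R * e) ^+ 2.
Proof.
move=> me; rewrite sum_sq.
have m0 : 0 <= (m%:R : R) by exact: ler0n.
have h1 : 0 <= m%:R * (a - e * (m%:R - 1) / 2) ^+ 2 by apply: mulr_ge0 => //; exact: sqr_ge0.
have h2 : m%:R * (1 - e ^+ 2) / 12 <= e ^+ 2 * m%:R * (m%:R ^+ 2 - 1) / 12.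
  have h : 1 <= (m%:R * e) ^+ 2 by rewrite expr_ge1 //; lra.
  have h3 : 0 <= m%:R * ((m%:R * e) ^+ 2 - 1) by apply: mulr_ge0 => //; lra.
  nra.
lra.
Qed.
Lemma S_big (R : realType) (eps : R) (A : Type) (idx : A) (op : A -> A -> A) (F : nat -> A) :
  0 < eps ->
  \big[op/idx]_(s : 'I_(grid_bound eps) | 0 <= (s:nat)%:R * eps <= 1) F s =
  \big[op/idx]_(s < (Num.trunc eps^-1).+1) F s.
Proof.
move=> e0.
rewrite (big_ord_widen (grid_bound eps) F) ?/grid_bound //.
apply: eq_bigl => s; move: (nat_of_ord s) => n.
rewrite ltnS truncn_ge_nat; last by rewrite invr_ge0 ltW.
rewrite mulr_ge0 ?ler0n ?(ltW e0) //=.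
by rewrite -div1r ler_pdivlMr.
Qed.

Lemma card_S (R : realType) (eps : R) : 0 < eps ->
  #|[pred s : 'I_(grid_bound eps) | 0 <= (s:nat)%:R * eps <= 1]| = (Num.trunc eps^-1).+1.
Proof.
move=> e0; rewrite -sum1_card.
rewrite (eq_bigl (fun s : 'I_(grid_bound eps) => 0 <= (s:nat)%:R * eps <= 1)) //.
by rewrite (@S_big R eps _ _ _ (fun _ => 1%N)) // sum1_card card_ord.
Qed.

Lemma coord_sum (R : realType) (eps a : R) : 0 < eps ->
  \sum_(s : 'I_(grid_bound eps) | 0 <= (s:nat)%:R * eps <= 1) (1 - (a - (s:nat)%:R * eps) ^+ 2 / 2)
   <= (#|[pred s : 'I_(grid_bound eps) | 0 <= (s:nat)%:R * eps <= 1]|)%:R * (1 - (1 - eps^+2)/24).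
Proof.
move=> e0.
rewrite card_S // (@S_big R eps _ _ _ (fun n : nat => 1 - (a - n%:R*eps)^+2/2)) //.
set m := (Num.trunc eps^-1).+1.
rewrite sumrB sumr_const card_ord -mulr_suml.
have me : 1 <= m%:R * eps.
  have hi : 0 <= eps^-1 by rewrite invr_ge0 ltW.
  have := truncn_itv hi => /andP[_ h].
  have h2 : eps^-1 * eps < m%:R * eps by rewrite ltr_pM2r.
  rewrite mulVf ?(negbT (gt_eqF e0)) // in h2; exact: ltW.
have := @sum_sq_ge R a eps m me.
set S := \sum_(t < m) _ => h.
lra.
Qed.

Lemma card_fam (T : finType) k (Fp : 'I_k -> pred T) :
  #|[set c : {ffun 'I_k -> T} | [forall l, Fp l (c l)]]| = (\prod_(l < k) #|Fp l|)%N.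
Proof.
rewrite -sum1_card.
have -> : (\prod_(l < k) #|Fp l| = \prod_(l < k) \sum_(t | Fp l t) 1)%N.
  by apply: eq_bigr => l _; rewrite sum1_card.
rewrite bigA_distr_big_dep /=.
rewrite [RHS](eq_bigr (fun _ => 1%N)); last by move=> f _; rewrite big1.
apply: eq_bigl => f; rewrite inE; apply/forallP/familyP => H l; exact: H.
Qed.

Lemma expR_conv (R : realType) (c w : R) : 0 <= w -> w <= 1 ->
  expR (- c * w) <= 1 - (1 - expR (-c)) * w.
Proof.
move=> w0 w1.
have := convex_expR (Itv01 w0 w1) (-c) 0.
rewrite !convRE /= expR0 /unstable.onem mulr0 addr0 mulrC => H.
apply: (le_trans H); lra.
Qed.

Lemma close_count (R : realType) (L : nat) (eps : R) (x : grid_idx (300*L) eps) :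
 0 < eps -> x \in grid (300*L) eps ->
 #|[set y in grid (300*L) eps | ~~ (Num.sqrt ((300*L)%:R) / 5 <=
        dist2 (grid_point x) (grid_point y))]|%:R
   <= 2 ^+ (12*L) * (1 - (1 - eps^+2)/24) ^+ (300*L) * #|grid (300*L) eps|%:R.
Proof.
move=> e0 xG.
set d := (300 * L)%N.
set G := grid d eps.
pose g := fun (l : 'I_d) (s : 'I_(grid_bound eps)) =>
   1 - (grid_point x l - (s:nat)%:R * eps)^+2/2.
have memG : forall y, (y \in G) = [forall l, 0 <= ((y l : nat)%:R * eps) <= 1].
  by move=> y; rewrite inE.
have cG : #|G| = (#|[pred s : 'I_(grid_bound eps) | (0 <= (s:nat)%:R * eps <= 1)%R]| ^ d)%N.
  transitivity #|[set c : {ffun 'I_d -> 'I_(grid_bound eps)} |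
      [forall l, (fun _ (s : 'I_(grid_bound eps)) => (0 <= (s:nat)%:R * eps <= 1)%R) l (c l)]]|.
    by apply: eq_card => y; rewrite memG ?inE.
  by rewrite (@card_fam _ d (fun _ (s : 'I_(grid_bound eps)) => (0 <= (s:nat)%:R * eps <= 1)%R)) prod_nat_const card_ord.
have xb : forall l, 0 <= grid_point x l <= 1.
  by move=> l; move: xG; rewrite memG => /forallP; apply.
have gb : forall l (s : 'I_(grid_bound eps)), 0 <= (s:nat)%:R * eps <= 1 -> 1/2 <= g l s <= 1.
  move=> l s /andP[s0 s1]; have /andP[x0 x1] := xb l; rewrite /g.
  move: (grid_point x l) x0 x1 => u x0 x1.
  move: ((s:nat)%:R * eps) s0 s1 => v s0 s1.
  have h1 : (u - v) ^+ 2 <= 1.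
    have : 0 <= (1 - (u - v)) * (1 + (u - v)) by apply: mulr_ge0; lra.
    nra.
  have h2 : 0 <= (u - v) ^+ 2 by exact: sqr_ge0.
  apply/andP; split; lra.
apply: (@le_trans _ _ (\sum_(y in G) 2 ^+ (12 * L) * \prod_(l < d) g l (y l))).
  rewrite -sum1_card natr_sum.
  rewrite (eq_bigl (fun y => (y \in G) && ~~ (Num.sqrt d%:R / 5 <= dist2 (grid_point x) (grid_point y)))); last by move=> y; rewrite inE.
  rewrite [X in _ <= X](bigID (fun y => ~~ (Num.sqrt d%:R / 5 <= dist2 (grid_point x) (grid_point y)))) /=.
  apply: ler_wpDr.
    apply: sumr_ge0 => y /andP[yG _]; apply: mulr_ge0; first exact: exprn_ge0.
    apply: prodr_ge0 => l _; have := gb l (y l); rewrite memG in yG.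
    by move/forallP: yG => yG /(_ (yG l)) /andP[h _]; lra.
  apply: ler_sum => y /andP[yG hy].
  have yb : forall l, 0 <= grid_point y l <= 1.
    by move=> l; move: yG; rewrite memG => /forallP; apply.
  have hlt : dist2 (grid_point x) (grid_point y) < Num.sqrt d%:R / 5 by rewrite ltNge.
  move: hlt; rewrite /dist2.
  set Sg := \sum_(l < d) _ => hlt.
  have Sg0 : 0 <= Sg by apply: sumr_ge0 => l _; exact: sqr_ge0.
  have hS : Sg < 12 * L%:R.
    have sd := sqr_sqrtr (ler0n R d); have sS := sqr_sqrtr Sg0.
    have q0 := sqrtr_ge0 Sg.
    have dE : (d%:R : R) = 300 * L%:R by rewrite natrM.
    rewrite dE in sd hlt.
    move: (Num.sqrt Sg) (Num.sqrt (300 * L%:R)) hlt sd sS q0 => a b hab hb ha a0.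
    nra.
  have l2 : 0 < ln (2 : R) by apply: ln_gt0; lra.
  have key : forall l, expR (- ln 2 * (grid_point x l - grid_point y l)^+2) <= g l (y l).
    move=> l; rewrite /g.
    have /andP[x0 x1] := xb l; have /andP[y0 y1] := yb l.
    rewrite -/(grid_point y l).
    move: (grid_point x l) (grid_point y l) x0 x1 y0 y1 => u v x0 x1 y0 y1.
    have w0 : 0 <= (u - v) ^+ 2 by exact: sqr_ge0.
    have w1 : (u - v) ^+ 2 <= 1.
      have : 0 <= (1 - (u - v)) * (1 + (u - v)) by apply: mulr_ge0; lra.
      nra.
    apply: le_trans (@expR_conv R (ln 2) _ w0 w1) _.
    rewrite expRN lnK ?posrE //; lra.
  have hprod : expR (- ln 2 * Sg) <= \prod_(l < d) g l (y l).
    rewrite /Sg mulr_sumr expR_sum; apply: ler_prod => l _.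
    by rewrite expR_ge0 /= key.
  have hlow : expR (- ln 2 * (12 * L%:R)) <= expR (- ln 2 * Sg) :> R.
    rewrite ler_expR; nra.
  have e12 : expR (- ln 2 * (12 * L%:R)) = (2 ^+ (12 * L))^-1 :> R.
    rewrite mulNr expRN (_ : 12 * L%:R = (12 * L)%:R); last by rewrite natrM.
    by rewrite expRM_natr lnK ?posrE.
  have p0 : (0 : R) < 2 ^+ (12 * L) by apply: exprn_gt0.
  rewrite -[X in X <= _](mulfV (lt0r_neq0 p0)); apply: ler_wpM2l; first exact: ltW.
  by rewrite -e12; apply: le_trans hprod.
rewrite -big_distrr /= -mulrA; apply: ler_wpM2l; first exact: exprn_ge0.
have -> : \sum_(y in G) \prod_(l < d) g l (y l) =
    \prod_(l < d) \sum_(s : 'I_(grid_bound eps) | (0 <= (s:nat)%:R * eps <= 1)) g l s.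
  rewrite bigA_distr_big_dep; apply: eq_bigl => y; rewrite memG.
  by apply/forallP/familyP => H l; exact: H l.
rewrite cG natrX -exprMn mulrC -[X in _ <= _ ^+ X](card_ord d) -prodr_const.
apply: ler_prod => l _; apply/andP; split.
  apply: sumr_ge0 => s hs; have /andP[h _] := gb l s hs; lra.
exact: coord_sum.
Qed.

Lemma card_all (T : finType) (G : {set T}) k (i j : 'I_k) : i != j ->
  #|[set c : {ffun 'I_k -> T} | [forall l, c l \in G]]| =
  (#|G| * #|G| * \prod_(l < k | (l != i) && (l != j)) #|G|)%N.
Proof.
move=> ij.
rewrite (@card_fam T k (fun _ t => t \in G)) (bigD1 i) //= (bigD1 j) 1?eq_sym //=.
by rewrite mulnA.
Qed.

Lemma card_pair_bad (T : finType) (G : {set T}) (Q : T -> T -> bool) k (i j : 'I_k) :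
 i != j ->
 #|[set c : {ffun 'I_k -> T} | [forall l, c l \in G] && ~~ Q (c i) (c j)]| =
 ((\sum_(x in G) #|[set y in G | ~~ Q x y]|) * \prod_(l < k | (l != i) && (l != j)) #|G|)%N.
Proof.
move=> ij.
rewrite -sum1_card.
rewrite (partition_big (fun c : {ffun 'I_k -> T} => (c i, c j)) (fun p => (p.1 \in G) && ((p.2 \in G) && ~~ Q p.1 p.2))); last first.
  by move=> c; rewrite inE => /andP[/forallP H ->]; rewrite !H.
rewrite big_distrl /=.
have -> : (\sum_(x in G) #|[set y in G | ~~ Q x y]| * \prod_(l < k | (l != i) && (l != j)) #|G|
   = \sum_(x in G) \sum_(y | (y \in G) && ~~ Q x y) \prod_(l < k | (l != i) && (l != j)) #|G|)%N.
  apply: eq_bigr => x _; rewrite -sum1_card big_distrl /=.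
  by apply: eq_big => [y|y _]; rewrite ?inE ?mul1n.
rewrite [RHS]pair_big_dep /=.
apply: eq_big => [[x y]|[x y]] /=; first by rewrite andbA.
move=> /andP[xG /andP[yG nQ]].
pose Fp := fun (l : 'I_k) (t : T) => if l == i then t == x else if l == j then t == y else t \in G.
transitivity #|[set c : {ffun 'I_k -> T} | [forall l, Fp l (c l)]]|.
  rewrite -sum1_card; apply: eq_bigl => c; rewrite !inE.
  apply/idP/forallP.
    case/andP=> /andP[/forallP cG _] /eqP [ci cj] l; rewrite /Fp.
    case: eqP => [->|_]; first by rewrite ci.
    case: eqP => [->|_]; first by rewrite cj.
    exact: cG.
  move=> H; have := H i; rewrite /Fp eqxx => /eqP ci.
  have := H j; rewrite /Fp eq_sym (negbTE ij) eqxx => /eqP cj.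
  rewrite ci cj nQ eqxx !andbT; apply/forallP => l.
  have := H l; rewrite /Fp; case: eqP => [->|_]; first by rewrite ci.
  case: eqP => [->|_]; first by rewrite cj.
  by [].
rewrite card_fam (bigD1 i) //= (bigD1 j) 1?eq_sym //=.
have c1 : forall z : T, #|(fun t => t == z)| = 1%N.
  by move=> z; rewrite -(card1 z); apply: eq_card => t; rewrite !inE.
rewrite /Fp eqxx c1 eq_sym (negbTE ij) eqxx c1 !mul1n.
apply: eq_bigr => l /andP[li lj].
by rewrite (negbTE li) (negbTE lj); apply: eq_card => t.
Qed.

Lemma sep_bound (R : realType) (T : finType) (G : {set T}) (Q : T -> T -> bool) k (rho : R) :
 0 <= rho ->
 (forall x, x \in G -> #|[set y in G | ~~ Q x y]|%:R <= rho * #|G|%:R) ->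
 (1 - k%:R^+2 * rho) * (#|G| ^ k)%:R <=
 #|[set c : {ffun 'I_k -> T} | [forall i, c i \in G] &&
       [forall i, forall j, (i != j) ==> Q (c i) (c j)]]|%:R.
Proof.
move=> rho0 Hx.
set V := [set c : {ffun 'I_k -> T} | [forall l, c l \in G]].
set Good := [set c : {ffun 'I_k -> T} | _].
set B := fun p : 'I_k * 'I_k =>
  [set c : {ffun 'I_k -> T} | [forall l, c l \in G] && ~~ Q (c p.1) (c p.2)].
have cV : #|V| = (#|G| ^ k)%N.
  by rewrite (@card_fam T k (fun _ t => t \in G)) prod_nat_const card_ord.
have sGV : Good \subset V.
  by apply/fintype.subsetP => c; rewrite !inE => /andP[].
have eV : (#|Good| + #|V :\: Good|)%N = #|V|.
  by rewrite -(cardsID Good V) (finset.setIidPr sGV).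
have hB : (#|V :\: Good| <= \sum_(p | p.1 != p.2) #|B p|)%N.
  rewrite -sum1_card.
  have -> : (\sum_(p | p.1 != p.2) #|B p| = \sum_(p | p.1 != p.2) \sum_c (c \in B p : nat))%N.
    apply: eq_bigr => p _; rewrite -sum1_card big_mkcond /=.
    by apply: eq_bigr => c _; case: (c \in B p).
  rewrite exchange_big /=.
  rewrite [X in (_ <= X)%N](bigID (fun c => c \in V :\: Good)) /=.
  apply: leq_trans (leq_addr _ _).
  apply: leq_sum => c; rewrite !inE => /andP[].
  rewrite negb_and => /orP[/negP //|/forallPn [i /forallPn [j]]].
  rewrite negb_imply => /andP[ij nQ] cG.
  rewrite (bigD1 (i, j)) //= inE cG nQ /=.
  exact: leq_addr.
have hBp : forall p : 'I_k * 'I_k, p.1 != p.2 -> (#|B p|%:R <= rho * (#|G| ^ k)%:R :> R).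
  move=> [i j] /= ij.
  rewrite card_pair_bad // -cV (@card_all T G k i j ij) !natrM mulrA.
  apply: ler_wpM2r; first exact: ler0n.
  rewrite natr_sum.
  rewrite (_ : rho * (_ * _) = \sum_(x in G) rho * #|G|%:R); last by rewrite sumr_const -mulrnAr -[#|G|%:R *+ #|G|]mulr_natr.
  by apply: ler_sum => x xG; exact: Hx.
have : (#|V :\: Good|%:R <= k%:R^+2 * rho * (#|G| ^ k)%:R :> R).
  apply: (le_trans (_ : _ <= (\sum_(p | p.1 != p.2) #|B p|)%:R)); first by rewrite ler_nat.
  rewrite natr_sum.
  apply: (le_trans (ler_sum _ hBp)).
  apply: le_trans (_ : \sum_(p : 'I_k * 'I_k) rho * (#|G| ^ k)%:R <= _).
    rewrite [X in _ <= X](bigID (fun p : 'I_k * 'I_k => p.1 != p.2)) /=.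
    rewrite lerDl; apply: sumr_ge0 => p _; apply: mulr_ge0 => //; exact: ler0n.
  rewrite sumr_const card_prod card_ord -[_ *+ (k * k)]mulr_natr natrM -expr2.
  by rewrite le_eqVlt; apply/orP; left; apply/eqP; ring.
move=> H.
have -> : (#|Good|%:R : R) = (#|G|^k)%:R - #|V :\: Good|%:R by rewrite -cV -eV natrD addrK.
by rewrite mulrBl mul1r lerD2l lerN2.
Qed.



Lemma powle {R : realType} (n : nat) {x y : R} : 0 <= x -> x <= y -> x ^+ n <= y ^+ n.
Proof.
move=> x0 xy; apply: lerXn2r; rewrite ?nnegrE //; exact: le_trans xy.
Qed.

Lemma exp5_lt (R : realType) : expR (5:R) < 500.
Proof.
have h1 : expR (1/4 : R) <= 4/3.
  have := expR_ge1Dx (-(1/4) : R); rewrite expRN => h.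
  have p := expR_gt0 (1/4 : R).
  have : expR (1/4 : R) * (1 + - (1/4)) <= expR (1/4) * (expR (1/4))^-1.
    by apply: ler_wpM2l => //; exact: ltW.
  rewrite mulfV ?(lt0r_neq0 p) //; lra.
have -> : (5 : R) = 20%:R * (1/4) by lra.
rewrite expRM_natl.
apply: le_lt_trans (powle 20 (ltW (expR_gt0 _)) h1) _.
lra.
Qed.

Lemma two_le (R : realType) : 2 <= expR (7/10 : R).
Proof.
have -> : (7/10 : R) = 64%:R * (7/640) by lra.
rewrite expRM_natl.
apply: le_trans (powle 64 _ (expR_ge1Dx _)); first lra.
lra.
Qed.

Lemma final_num (R : realType) (k L : nat) (eps : R) : (0 < k)%N ->
  ln (k%:R : R) <= L%:R -> 0 <= eps -> eps <= 1/12 ->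
  k%:R ^+ 4 * (2 ^+ (12 * L) * (1 - (1 - eps ^+ 2) / 24) ^+ (300 * L)) <= 1.
Proof.
move=> k0 hL e0 e1.
have kp : (0 : R) < k%:R by rewrite ltr0n.
have A : (k%:R : R) ^+ 4 <= expR (4%:R * L%:R).
  rewrite expRM_natl; apply: powle; first exact: ltW.
  by rewrite -[X in X <= _](lnK kp) ler_expR.
have B : (2 : R) ^+ (12 * L) <= expR ((12 * L)%:R * (7/10)).
  by rewrite expRM_natl; apply: powle; [lra | exact: two_le].
set c := 1 - (1 - eps ^+ 2) / 24.
have c0 : 0 <= c by rewrite /c; nra.
have C : c ^+ (300 * L) <= expR ((300 * L)%:R * (- ((1 - eps ^+ 2) / 24))).
  rewrite expRM_natl; apply: powle => //.
  by apply: le_trans (expR_ge1Dx _); rewrite /c; lra.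
apply: le_trans (_ : expR (4%:R * L%:R) * (expR ((12 * L)%:R * (7/10)) *
   expR ((300 * L)%:R * (- ((1 - eps ^+ 2) / 24)))) <= 1).
  apply: ler_pM; rewrite ?exprn_ge0 ?mulr_ge0 ?exprn_ge0 //.
  apply: ler_pM; rewrite ?exprn_ge0 //; lra.
rewrite -!expRD expR_le1 !natrM.
have L0 : (0 : R) <= L%:R by exact: ler0n.
have : L%:R * eps ^+ 2 <= L%:R / 144.
  have : eps ^+ 2 <= 1 / 144 by nra.
  nra.
nra.
Qed.

Theorem lemma8 (R : realType) (k : nat) (delta : R) :
  (500 < k)%N ->
  (ln (k%:R : R)) ^+ 3 / Num.sqrt (k%:R) < delta ->
  delta < 1 / 100 ->
  let L : nat := `|Num.ceil (ln (k%:R : R))|%N in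
  let d : nat := (300 * L)%N in
  let eps : R := 50 * delta / L%:R in
  1 - 1 / (k%:R ^+ 2) <= prob_sep d eps k (Num.sqrt (d%:R) / 5).
Proof.
move=> hk h1 h2; cbv zeta.
set L := `|Num.ceil (ln (k%:R : R))|%N.
set d := (300 * L)%N.
set eps := 50 * delta / L%:R.
have k0 : (0 < k)%N := leq_ltn_trans (leq0n 500) hk.
have kp : (0:R) < k%:R by rewrite ltr0n.
have l5 : 5 < ln (k%:R : R).
  rewrite -ltr_expR lnK ?posrE //; apply: lt_trans (exp5_lt R) _.
  by rewrite ltr_nat.
have hLr : ln (k%:R : R) <= L%:R.
  rewrite /L natr_absz ger0_norm; first exact: ceil_ge.
  by rewrite ceil_ge0; lra.
have L6 : (6 : R) <= L%:R.
  have : (5 : R) < L%:R by lra.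
  by rewrite ltr_nat ler_nat.
have dpos : 0 < delta.
  have : 0 < ln (k%:R : R) ^+ 3 / Num.sqrt (k%:R).
    by apply: divr_gt0; [apply: exprn_gt0; lra | rewrite sqrtr_gt0].
  lra.
have Lp : (0 : R) < L%:R by lra.
have e0 : 0 < eps by rewrite /eps; apply: divr_gt0 => //; lra.
have e1 : eps <= 1/12.
  by rewrite /eps ler_pdivrMr //; lra.
rewrite /prob_sep.
set N := ((#|grid d eps| ^ k)%N%:R : R).
have Gne : (0 < #|grid d eps|)%N.
  apply/card_gt0P.
  exists [ffun => (Ordinal (isT : (0 < grid_bound eps)%N))].
  rewrite inE; apply/forallP => l; rewrite /grid_point ffunE /= mul0r lexx ler01.
  by [].
have Np : 0 < N by rewrite /N ltr0n expn_gt0 Gne.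
rewrite ler_pdivlMr //.
set rho := (2 : R) ^+ (12 * L) * (1 - (1 - eps ^+ 2) / 24) ^+ (300 * L).
have rho0 : 0 <= rho.
  rewrite /rho; apply: mulr_ge0; apply: exprn_ge0 => //.
  have := sqr_ge0 eps.
  lra.
have := @sep_bound R (grid_idx d eps) (grid d eps)
   (fun x y => Num.sqrt d%:R / 5 <= dist2 (grid_point x) (grid_point y)) k rho rho0.
move=> /(_ (fun x xG => @close_count R L eps x e0 xG)) H.
apply: le_trans H.
apply: ler_wpM2r; first exact: ltW.
have fn := @final_num R k L eps k0 hLr (ltW e0) e1.
have k2 : (0 : R) < k%:R ^+ 2 by apply: exprn_gt0.
rewrite lerD2l lerN2 ler_pdivlMr //.
have -> : k%:R ^+ 2 * rho * k%:R ^+ 2 = k%:R ^+ 4 * rho by ring.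
exact: fn.
Qed.
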